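(* Let $d_1,\dots,d_m$ be positive integers with $\sum_{j=1}^m d_j=n$ and let $B=\sum_{j=1}^m d_j\log_2(n/d_j)$. Fix $i$ and let $d_i'=d_i+1$, $d_j'=d_j$ for $j\ne i$, $n'=n+1$, and $B'=\sum_{j=1}^m d_j'\log_2(n'/d_j')$. Then there is an absolute constant $c>0$ (independent of $n,m,d_1,\dots,d_m,i$) such that $$(B'+n')-(B+n)\ \ge\ c\cdot\log(n/d_i).$$
   Context: $\log_2$ denotes the binary logarithm and $\log(x):=\max(\log_2 x,1)$. This models inserting one element into gap $\Delta_i$ of a partition of $n$ elements into gaps of sizes $d_j=|\Delta_j|$. *)

(* Defs.v *)
From Stdlib Require Import Reals Lra Lia Arith List.
Open Scope R_scope.

Definition sumR (m : nat) (f : nat -> R) : R :=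
  fold_right Rplus 0 (map f (seq 0 m)).

Definition sumN (m : nat) (f : nat -> nat) : nat :=
  fold_right Nat.add 0%nat (map f (seq 0 m)).

Definition log2 (x : R) : R := ln x / ln 2.

(* log(x) := max(log2 x, 1) *)
Definition logp (x : R) : R := Rmax (log2 x) 1.

Definition Bsum (m : nat) (d : nat -> nat) : R :=
  sumR m (fun j => INR (d j) * log2 (INR (sumN m d) / INR (d j))).

Definition incr_at (d : nat -> nat) (i : nat) : nat -> nat :=
  fun j => if Nat.eqb j i then S (d j) else d j.

(* Main.v *)
Require Import Defs.
From Stdlib Require Import Reals Lra Lia Arith List.
Open Scope R_scope.

Definition sl (l : list nat) (f : nat -> R) := fold_right Rplus 0 (map f l).

Lemma sl_ext l f g : (forall j, In j l -> f j = g j) -> sl l f = sl l g.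
Proof. induction l; simpl; intros H; auto. unfold sl in *; simpl. rewrite H by auto.
  rewrite IHl; auto. Qed.

Lemma sl_lin l f g a : sl l (fun j => a * f j - g j) = a * sl l f - sl l g.
Proof. induction l; unfold sl in *; simpl; [ring|]. rewrite IHl. ring. Qed.

Lemma slN l d : INR (fold_right Nat.add 0%nat (map d l)) = sl l (fun j => INR (d j)).
Proof. induction l; unfold sl in *; simpl; auto. rewrite plus_INR, IHl. auto. Qed.

Lemma sl_incr l d i F : NoDup l -> In i l ->
  sl l (fun j => F (incr_at d i j)) = sl l (fun j => F (d j)) + F (S (d i)) - F (d i).
Proof. induction l as [|a l IH]; intros Hnd Hin; [destruct Hin|].
  inversion Hnd; subst. unfold sl in *; simpl.
  destruct Hin as [->|Hin].
  - unfold incr_at at 1. rewrite Nat.eqb_refl.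
    assert (E: fold_right Rplus 0 (map (fun j => F (incr_at d i j)) l) = fold_right Rplus 0 (map (fun j => F (d j)) l)).
    { apply (sl_ext l). intros j Hj. unfold incr_at. destruct (Nat.eqb_spec j i); subst; tauto. }
    rewrite E. ring.
  - rewrite IH by auto. unfold incr_at at 1. destruct (Nat.eqb_spec a i); [subst; tauto|]. ring.
Qed.

Lemma sumN_incr m d i : (i < m)%nat -> sumN m (incr_at d i) = S (sumN m d).
Proof. intros Hi. apply INR_eq. unfold sumN. rewrite S_INR, !slN.
  rewrite (sl_incr _ d i (fun x => INR x)). rewrite S_INR. ring.
  apply seq_NoDup. apply in_seq. lia. Qed.

Lemma Bsum_eq m d : (forall j, (j < m)%nat -> (0 < d j)%nat) -> (0 < sumN m d)%nat ->
  Bsum m d * ln 2 = INR (sumN m d) * ln (INR (sumN m d)) - sl (seq 0 m) (fun j => INR (d j) * ln (INR (d j))).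
Proof. intros Hd Hn. unfold Bsum, sumR. fold (sl (seq 0 m) (fun j => INR (d j) * log2 (INR (sumN m d) / INR (d j)))).
  set (N := INR (sumN m d)).
  assert (HN : 0 < N) by (apply lt_0_INR; auto).
  assert (Hl2 : ln 2 <> 0) by (pose proof ln_lt_2; lra).
  rewrite (sl_ext _ _ (fun j => (ln N / ln 2) * INR (d j) - INR (d j) * ln (INR (d j)) / ln 2)).
  2:{ intros j Hj. apply in_seq in Hj. pose proof (lt_0_INR _ (Hd j ltac:(lia))).
      unfold log2, Rdiv. rewrite ln_mult, ln_Rinv by (try apply Rinv_0_lt_compat; lra). field; auto. }
  rewrite sl_lin.
  assert (forall l, sl l (fun j => INR (d j) * ln (INR (d j)) / ln 2) = sl l (fun j => INR (d j) * ln (INR (d j))) / ln 2).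
  { induction l; unfold sl in *; simpl. field; auto. rewrite IHl. field; auto. }
  rewrite H. unfold N at 2. unfold sumN. rewrite slN. field. auto. Qed.
Lemma ln_le' x y : 0 < x -> x <= y -> ln x <= ln y.
Proof. intros Hx Hxy. destruct (Rle_lt_or_eq_dec _ _ Hxy) as [H|H].
  - left; apply ln_increasing; lra.
  - subst; lra. Qed.

Lemma ln_le_xm1 y : 0 < y -> ln y <= y - 1.
Proof. intros Hy. pose proof (exp_ineq1_le (ln y)). rewrite exp_ln in H; lra. Qed.

Lemma step_up N : 1 <= N -> (N+1)*ln(N+1) - N*ln N >= ln (N+1) + N/(N+1).
Proof. intros HN.
  assert (H : ln (N/(N+1)) <= N/(N+1) - 1) by (apply ln_le_xm1; apply Rdiv_lt_0_compat; lra).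
  unfold Rdiv in H. rewrite ln_mult, ln_Rinv in H by (try apply Rinv_0_lt_compat; lra).
  assert (E : N * / (N+1) - 1 = - / (N+1)) by (field; lra).
  rewrite E in H.
  assert (N * / (N+1) = 1 - / (N+1)) by (field; lra).
  unfold Rdiv. rewrite H0.
  assert (0 <= N) by lra.
  assert (ln (N+1) - ln N >= / (N+1)) by lra.
  nra. Qed.

Lemma step_down D : 1 <= D -> (D+1)*ln(D+1) - D*ln D <= ln (D+1) + 1.
Proof. intros HD.
  assert (H : ln ((D+1)/D) <= (D+1)/D - 1) by (apply ln_le_xm1; apply Rdiv_lt_0_compat; lra).
  unfold Rdiv in H. rewrite ln_mult, ln_Rinv in H by (try apply Rinv_0_lt_compat; lra).
  assert (E : (D+1) * / D - 1 = / D) by (field; lra).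
  rewrite E in H.
  assert (D * (ln (D+1) - ln D) <= D * / D) by (apply Rmult_le_compat_l; lra).
  rewrite Rinv_r in H0 by lra. nra. Qed.

Lemma key N D : 1 <= D -> D <= N ->
  let L := ln N - ln D in
  let t := ln 2 in
  (N+1)*ln(N+1) - N*ln N - ((D+1)*ln(D+1) - D*ln D) + t
  >= (t - /2) / t * Rmax (L / t) 1 * t.
Proof. intros HD HDN L t.
  pose proof (step_up N ltac:(lra)). pose proof (step_down D HD).
  assert (Ht : /2 < t) by apply ln_lt_2.
  assert (HNN : N/(N+1) >= /2).
  { apply Rle_ge. apply (Rmult_le_reg_r (N+1)); [lra|]. unfold Rdiv. rewrite Rmult_assoc, Rinv_l by lra. lra. }
  assert (A1 : ln (D+1) <= ln (N+1)) by (apply ln_le'; lra).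
  assert (A2 : ln N + ln (D+1) <= ln 2 + ln D + ln (N+1)).
  { rewrite <- !ln_mult by lra. apply ln_le'. nra. nra. }
  assert (G : (N+1)*ln(N+1) - N*ln N - ((D+1)*ln(D+1) - D*ln D) + t >= Rmax (L - t) 0 + (t - /2)).
  { unfold Rmax; destruct Rle_dec; unfold L, t in *; lra. }
  assert (Ht0 : 0 < t) by lra.
  assert (E : (t - /2) / t * Rmax (L / t) 1 * t = (t - /2) * Rmax (L / t) 1) by (field; lra).
  rewrite E. unfold Rmax in *. destruct (Rle_dec (L/t) 1) as [h|h]; destruct (Rle_dec (L - t) 0) as [h'|h'].
  - nra.
  - nra.
  - assert (L > t). { apply Rnot_le_lt in h. apply (Rmult_lt_compat_r t) in h; [|lra].
      unfold Rdiv in h. rewrite Rmult_assoc, Rinv_l in h by lra. lra. }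
    lra.
  - apply Rnot_le_lt in h.
    assert (L = L / t * t) by (field; lra). nra.
Qed.

Lemma le_sum (l : list nat) (d : nat -> nat) i : In i l -> (d i <= fold_right Nat.add 0%nat (map d l))%nat.
Proof. induction l; simpl; [tauto|]. intros [H|H]; subst; try lia. specialize (IHl H). lia. Qed.

Theorem lemma5p1 :
  exists c : R, 0 < c /\
    forall (m : nat) (d : nat -> nat) (i : nat),
      (i < m)%nat ->
      (forall j, (j < m)%nat -> (0 < d j)%nat) ->
      (Bsum m (incr_at d i) + INR (sumN m (incr_at d i)))
        - (Bsum m d + INR (sumN m d))
      >= c * logp (INR (sumN m d) / INR (d i)).
Proof.
  pose proof ln_lt_2 as Hl2.
  exists ((ln 2 - /2) / ln 2). split.
  { apply Rdiv_lt_0_compat; lra. }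
  intros m d i Hi Hd.
  assert (Hdi : (d i <= sumN m d)%nat) by (apply le_sum; apply in_seq; lia).
  assert (Hdi0 := Hd i Hi).
  assert (Hd' : forall j, (j < m)%nat -> (0 < incr_at d i j)%nat).
  { intros j Hj. unfold incr_at. destruct (Nat.eqb j i); specialize (Hd j Hj); lia. }
  assert (E1 := Bsum_eq m d Hd ltac:(lia)).
  assert (E2 := Bsum_eq m (incr_at d i) Hd' ltac:(rewrite sumN_incr; lia)).
  rewrite sumN_incr in * by auto.
  rewrite (sl_incr _ d i (fun x => INR x * ln (INR x))) in E2 by (apply seq_NoDup || (apply in_seq; lia)).
  rewrite S_INR in *.
  set (N := INR (sumN m d)) in *. set (D := INR (d i)) in *.
  assert (HD : 1 <= D) by (unfold D; apply (le_INR 1); lia).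
  assert (HDN : D <= N) by (unfold D, N; apply le_INR; lia).
  pose proof (key N D HD HDN) as K. simpl in K.
  unfold logp, log2.
  assert (EL : ln (N / D) = ln N - ln D).
  { unfold Rdiv. rewrite ln_mult, ln_Rinv by (try apply Rinv_0_lt_compat; lra). ring. }
  rewrite EL.
  apply Rle_ge. apply (Rmult_le_reg_r (ln 2)); [lra|].
  apply Rge_le in K. eapply Rle_trans; [apply K|].
  right. rewrite S_INR in E2. fold D in E2. rewrite !Rmult_minus_distr_r, !Rmult_plus_distr_r, E1, E2. ring.
Qed.
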